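(* Let $\Sigma$ be a signature, $T$ a monad on sets carrying a continuous $\Sigma$-algebra structure, and $\Gamma$ a relator for the monad $T$ that is inductive and respects $\Sigma$. Let $\precsim^H=(\precsim^H_{\mathcal{T}},\precsim^H_{\mathcal{V}})$ be the Howe extension of applicative $\Gamma$-similarity. If $M,N$ are closed terms with $\emptyset\vdash M\precsim^H_{\mathcal{T}}N$ and $M\Downarrow_n X$, then $X\,\Gamma(\precsim^H_{\mathcal{V}})\,[\![N]\!]$, where $\precsim^H_{\mathcal{V}}$ here denotes its closed part $\{(V,W)\mid\emptyset\vdash V\precsim^H_{\mathcal{V}}W\}$.
   Context: An $\omega$CPPO is a poset with least element $\bot$ in which every $\omega$-chain has a lub; continuous = monotone and preserving such lubs. $T$ (unit $\eta$, bind $u\texttt{>>=}f$) carries a continuous $\Sigma$-algebra structure if each $TX$ is an $\omega$CPPO, bind is continuous in both arguments, and each $\sigma\in\Sigma$ of arity $k$ is interpreted by a continuous $\sigma^T:(TX)^k\to TX$. A relator $\Gamma$ for $T$ assigns to each $R\subseteq X\times Y$ a relation $\Gamma R\subseteq TX\times TY$ with: $=_{TX}\subseteq\Gamma(=_X)$; $\Gamma S\circ\Gamma R\subseteq\Gamma(S\circ R)$; $\Gamma((f\times g)^{-1}R)=(Tf\times Tg)^{-1}\Gamma R$ where $(f\times g)^{-1}R=\{(z,w)\mid f(z)\,R\,g(w)\}$; monotone in $R$; $x\,R\,y\Rightarrow\eta(x)\,\Gamma R\,\eta(y)$; and if $x\,R\,y\Rightarrow f(x)\,\Gamma S\,g(y)$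 for all $x,y$ then $u\,\Gamma R\,v\Rightarrow(u\texttt{>>=}f)\,\Gamma S\,(v\texttt{>>=}g)$. Inductive: for every $R$, $\bot\,\Gamma R\,v$ for all $v$, and for every $\omega$-chain $(u_n)$, $(\forall n.\ u_n\,\Gamma R\,v)\Rightarrow\bigsqcup_n u_n\,\Gamma R\,v$. Respects $\Sigma$: $u_i\,\Gamma R\,v_i$ for all $i$ implies $\sigma^T(\vec u)\,\Gamma R\,\sigma^T(\vec v)$. Terms/values: $M,N::=\mathsf{return}\,V\mid VW\mid(M\ \mathsf{to}\ x.N)\mid\sigma(M_1,\dots,M_{\alpha(\sigma)})$, $V,W::=x\mid\lambda x.M$, modulo $\alpha$-equivalence; $M[V/x]$ substitution; $\mathcal{T}_0,\mathcal{V}_0$ closed terms/values; $\mathcal{T}(\bar x),\mathcal{V}(\bar x)$ those with free variables in $\bar x$. Judgment $M\Downarrow_n X$ ($M$ closed, $X\in T\mathcal{V}_0$) defined inductively: $M\Downarrow_0\bot$; $\mathsf{return}\,V\Downarrow_{n+1}\eta(V)$; if $M\Downarrow_n X$ and $N[V/x]\Downarrow_n Y_V$ for every closed $V$ then $(M\ \mathsf{to}\ x.N)\Downarrow_{n+1}X\texttt{>>=}(V\mapsto Y_V)$; if $M[V/x]\Downarrow_n X$ then $(\lambda x.M)V\Downarrow_{n+1}X$; if $M_i\Downarrow_n X_i$ ($i\le k$) then $\sigma(M_1,\dots,M_k)\Downarrow_{n+1}\sigma^T(X_1,\dots,X_k)$. Also $M^{(0)}=\bot$, $(\mathsf{return}\,V)^{(n+1)}=\eta(V)$,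 $((\lambda x.M)V)^{(n+1)}=(M[V/x])^{(n)}$, $(M\ \mathsf{to}\ x.N)^{(n+1)}=M^{(n)}\texttt{>>=}(V\mapsto(N[V/x])^{(n)})$, $(\sigma(\vec M))^{(n+1)}=\sigma^T(M_1^{(n)},\dots)$; this is an $\omega$-chain and $[\![M]\!]=\bigsqcup_nM^{(n)}$. A closed relation $R=(R_{\mathcal{T}}\subseteq\mathcal{T}_0\times\mathcal{T}_0,R_{\mathcal{V}}\subseteq\mathcal{V}_0\times\mathcal{V}_0)$ is an applicative $\Gamma$-simulation if $M\,R_{\mathcal{T}}\,N\Rightarrow[\![M]\!]\,\Gamma R_{\mathcal{V}}\,[\![N]\!]$ and $V\,R_{\mathcal{V}}\,W\Rightarrow VU\,R_{\mathcal{T}}\,WU$ for every closed value $U$. Applicative $\Gamma$-similarity $\precsim=(\precsim_{\mathcal{T}},\precsim_{\mathcal{V}})$ is the largest one. Its open extension $\precsim^\circ$: $\bar x\vdash M\precsim^\circ_{\mathcal{T}}N$ iff $M,N\in\mathcal{T}(\bar x)$ and $M[\bar V/\bar x]\precsim_{\mathcal{T}}N[\bar V/\bar x]$ for all closed values $\bar V$ substituted simultaneously for $\bar x$ (similarly for values). The Howe extension $\precsim^H$ is the least pair of sets of triples $(\bar x,\cdot,\cdot)$ closed under: (H1) if $x\in\bar x$ and $\bar x\vdash x\precsim^\circ_{\mathcal{V}}V$ then $\bar x\vdash x\precsim^H_{\mathcal{V}}V$; (H2) if $x\notin\bar x$, $\bar x\cup\{x\}\vdash M\precsim^H_{\mathcal{T}}L$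 and $\bar x\vdash\lambda x.L\precsim^\circ_{\mathcal{V}}V$ then $\bar x\vdash\lambda x.M\precsim^H_{\mathcal{V}}V$; (H3) if $\bar x\vdash V\precsim^H_{\mathcal{V}}W$ and $\bar x\vdash\mathsf{return}\,W\precsim^\circ_{\mathcal{T}}N$ then $\bar x\vdash\mathsf{return}\,V\precsim^H_{\mathcal{T}}N$; (H4) if $\bar x\vdash V\precsim^H_{\mathcal{V}}V'$, $\bar x\vdash W\precsim^H_{\mathcal{V}}W'$ and $\bar x\vdash V'W'\precsim^\circ_{\mathcal{T}}N$ then $\bar x\vdash VW\precsim^H_{\mathcal{T}}N$; (H5) if $\bar x\vdash M\precsim^H_{\mathcal{T}}L$, $\bar x\cup\{x\}\vdash M'\precsim^H_{\mathcal{T}}L'$ and $\bar x\vdash(L\ \mathsf{to}\ x.L')\precsim^\circ_{\mathcal{T}}N$ then $\bar x\vdash(M\ \mathsf{to}\ x.M')\precsim^H_{\mathcal{T}}N$; (H6) if $\bar x\vdash M_k\precsim^H_{\mathcal{T}}N_k$ for all $k\le n$ and $\bar x\vdash\sigma(N_1,\dots,N_n)\precsim^\circ_{\mathcal{T}}N$ then $\bar x\vdash\sigma(M_1,\dots,M_n)\precsim^H_{\mathcal{T}}N$. *)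

(* Defs.v *)
From mathcomp Require Import all_boot.

Set Implicit Arguments.
Unset Strict Implicit.
Unset Printing Implicit Defensive.

(* Syntax: fine-grained call-by-value lambda calculus with algebraic        *)
(* operations of a signature (S, ar).  Terms are taken modulo alpha via     *)
(* de Bruijn indices: in (Seq M N) = (M to x. N) and in (Lam M) = (lambda   *)
(* x. M) the bound variable is index 0.  A context xbar of n distinct       *)
(* variables is represented by the number n (indices 0 .. n-1).             *)

Section Syntax.
Variables (Sg : Type) (ar : Sg -> nat).

Inductive tm : Type :=
| Ret : vl -> tm
| App : vl -> vl -> tm
| Seq : tm -> tm -> tm
| Op : forall s : Sg, ('I_(ar s) -> tm) -> tm
with vl : Type :=
| Var : nat -> vl
| Lam : tm -> vl.

(* scoping: tm_sc n M  <=>  M in T(xbar) with |xbar| = n *)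
Fixpoint tm_sc (n : nat) (M : tm) {struct M} : bool :=
  match M with
  | Ret v => vl_sc n v
  | App v w => vl_sc n v && vl_sc n w
  | Seq M1 N => tm_sc n M1 && tm_sc n.+1 N
  | Op s f => [forall i, tm_sc n (f i)]
  end
with vl_sc (n : nat) (v : vl) {struct v} : bool :=
  match v with
  | Var x => x < n
  | Lam M => tm_sc n.+1 M
  end.

Definition tm_closed (M : tm) : bool := tm_sc 0 M.
Definition vl_closed (v : vl) : bool := vl_sc 0 v.

Definition cvl : Type := {v : vl | vl_closed v}.

Definition upren (r : nat -> nat) (x : nat) : nat :=
  match x with 0 => 0 | y.+1 => (r y).+1 end.

Fixpoint ren_tm (r : nat -> nat) (M : tm) {struct M} : tm :=
  match M with
  | Ret v => Ret (ren_vl r v)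
  | App v w => App (ren_vl r v) (ren_vl r w)
  | Seq M1 N => Seq (ren_tm r M1) (ren_tm (upren r) N)
  | Op s f => Op (fun i => ren_tm r (f i))
  end
with ren_vl (r : nat -> nat) (v : vl) {struct v} : vl :=
  match v with
  | Var x => Var (r x)
  | Lam M => Lam (ren_tm (upren r) M)
  end.

Definition up (sg : nat -> vl) (x : nat) : vl :=
  match x with 0 => Var 0 | y.+1 => ren_vl S (sg y) end.

Fixpoint subst_tm (sg : nat -> vl) (M : tm) {struct M} : tm :=
  match M with
  | Ret v => Ret (subst_vl sg v)
  | App v w => App (subst_vl sg v) (subst_vl sg w)
  | Seq M1 N => Seq (subst_tm sg M1) (subst_tm (up sg) N)
  | Op s f => Op (fun i => subst_tm sg (f i))
  end
with subst_vl (sg : nat -> vl) (v : vl) {struct v} : vl :=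
  match v with
  | Var x => sg x
  | Lam M => Lam (subst_tm (up sg) M)
  end.

Definition scons (v : vl) (sg : nat -> vl) (x : nat) : vl :=
  match x with 0 => v | y.+1 => sg y end.

Definition subst1 (M : tm) (v : vl) : tm := subst_tm (scons v Var) M.

End Syntax.

Arguments Var {Sg ar}.

Record MonadData (Sg : Type) (ar : Sg -> nat) := {
  T : Type -> Type;
  ret : forall X : Type, X -> T X;
  bind : forall X Y : Type, T X -> (X -> T Y) -> T Y;
  le : forall X : Type, T X -> T X -> Prop;
  bot : forall X : Type, T X;
  lub : forall X : Type, (nat -> T X) -> T X;
  op : forall (X : Type) (s : Sg), ('I_(ar s) -> T X) -> T X
}.

Arguments T {Sg ar} m X.
Arguments ret {Sg ar} m {X} x.
Arguments bind {Sg ar} m {X Y} u f.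
Arguments le {Sg ar} m {X} u v.
Arguments bot {Sg ar} m {X}.
Arguments lub {Sg ar} m {X} c.
Arguments op {Sg ar} m {X} s us.

Section MonadProps.
Variables (Sg : Type) (ar : Sg -> nat) (m : MonadData ar).

Definition is_monad : Prop :=
  (forall (X Y : Type) (x : X) (f : X -> T m Y), bind m (ret m x) f = f x) /\
  (forall (X : Type) (u : T m X), bind m u (fun x => ret m x) = u) /\
  (forall (X Y Z : Type) (u : T m X) (f : X -> T m Y) (g : Y -> T m Z),
      bind m (bind m u f) g = bind m u (fun x => bind m (f x) g)).

Definition chain (X : Type) (c : nat -> T m X) : Prop :=
  forall n, le m (c n) (c n.+1).

Definition is_wcppo : Prop :=
  forall X : Type,
    (forall u : T m X, le m u u) /\
    (forall u v w : T m X, le m u v -> le m v w -> le m u w) /\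
    (forall u v : T m X, le m u v -> le m v u -> u = v) /\
    (forall u : T m X, le m (bot m) u) /\
    (forall c : nat -> T m X, chain c ->
       (forall n, le m (c n) (lub m c)) /\
       (forall u, (forall n, le m (c n) u) -> le m (lub m c) u)).

Definition bind_continuous : Prop :=
  (forall (X Y : Type) (u u' : T m X) (f : X -> T m Y),
      le m u u' -> le m (bind m u f) (bind m u' f)) /\
  (forall (X Y : Type) (u : T m X) (f g : X -> T m Y),
      (forall x, le m (f x) (g x)) -> le m (bind m u f) (bind m u g)) /\
  (forall (X Y : Type) (c : nat -> T m X) (f : X -> T m Y),
      chain c -> bind m (lub m c) f = lub m (fun n => bind m (c n) f)) /\
  (forall (X Y : Type) (u : T m X) (fc : nat -> X -> T m Y),
      (forall x, chain (fun n => fc n x)) ->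
      bind m u (fun x => lub m (fun n => fc n x)) = lub m (fun n => bind m u (fc n))).

Definition ops_continuous : Prop :=
  (forall (X : Type) (s : Sg) (us vs : 'I_(ar s) -> T m X),
      (forall i, le m (us i) (vs i)) -> le m (op m s us) (op m s vs)) /\
  (forall (X : Type) (s : Sg) (cs : nat -> 'I_(ar s) -> T m X),
      (forall i, chain (fun n => cs n i)) ->
      op m s (fun i => lub m (fun n => cs n i)) = lub m (fun n => op m s (cs n))).

Definition cont_sigma_monad : Prop :=
  is_monad /\ is_wcppo /\ bind_continuous /\ ops_continuous.

Definition RelatorT : Type :=
  forall X Y : Type, (X -> Y -> Prop) -> T m X -> T m Y -> Prop.

Definition fmap (X Y : Type) (f : X -> Y) (u : T m X) : T m Y :=
  bind m u (fun x => ret m (f x)).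

Definition is_relator (G : RelatorT) : Prop :=
  (forall (X : Type) (u : T m X), G X X (@eq X) u u) /\
  (forall (X Y Z : Type) (R : X -> Y -> Prop) (R' : Y -> Z -> Prop) u v w,
      G _ _ R u v -> G _ _ R' v w ->
      G _ _ (fun x z => exists y, R x y /\ R' y z) u w) /\
  (forall (X Y X' Y' : Type) (f : X' -> X) (g : Y' -> Y) (R : X -> Y -> Prop) u v,
      G _ _ (fun z w => R (f z) (g w)) u v <-> G _ _ R (fmap f u) (fmap g v)) /\
  (forall (X Y : Type) (R R' : X -> Y -> Prop),
      (forall x y, R x y -> R' x y) -> forall u v, G _ _ R u v -> G _ _ R' u v) /\
  (forall (X Y : Type) (R : X -> Y -> Prop) x y, R x y -> G _ _ R (ret m x) (ret m y)) /\
  (forall (X Y X' Y' : Type) (R : X -> Y -> Prop) (R' : X' -> Y' -> Prop)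
          (f : X -> T m X') (g : Y -> T m Y') u v,
      (forall x y, R x y -> G _ _ R' (f x) (g y)) ->
      G _ _ R u v -> G _ _ R' (bind m u f) (bind m v g)).

Definition relator_inductive (G : RelatorT) : Prop :=
  forall (X Y : Type) (R : X -> Y -> Prop),
    (forall v : T m Y, G _ _ R (bot m) v) /\
    (forall (c : nat -> T m X) (v : T m Y),
        chain c -> (forall n, G _ _ R (c n) v) -> G _ _ R (lub m c) v).

Definition relator_respects_sig (G : RelatorT) : Prop :=
  forall (X Y : Type) (R : X -> Y -> Prop) (s : Sg)
         (us : 'I_(ar s) -> T m X) (vs : 'I_(ar s) -> T m Y),
    (forall i, G _ _ R (us i) (vs i)) -> G _ _ R (op m s us) (op m s vs).

Notation tm := (tm ar).
Notation vl := (vl ar).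
Notation cvl := (cvl ar).

Inductive eval : tm -> nat -> T m cvl -> Prop :=
| eval0 (M : tm) : eval M 0 (bot m)
| evalRet (V : cvl) (n : nat) : eval (Ret (val V)) n.+1 (ret m V)
| evalSeq (M N : tm) (n : nat) (X : T m cvl) (Y : cvl -> T m cvl) :
    eval M n X -> (forall V : cvl, eval (subst1 N (val V)) n (Y V)) ->
    eval (Seq M N) n.+1 (bind m X Y)
| evalApp (M : tm) (V : cvl) (n : nat) (X : T m cvl) :
    eval (subst1 M (val V)) n X -> eval (App (Lam M) (val V)) n.+1 X
| evalOp (s : Sg) (Ms : 'I_(ar s) -> tm) (n : nat) (Xs : 'I_(ar s) -> T m cvl) :
    (forall i, eval (Ms i) n (Xs i)) -> eval (Op Ms) n.+1 (op m s Xs).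

(* approximants M^(n) (meaningful for closed M) *)
Fixpoint approx (n : nat) (M : tm) {struct n} : T m cvl :=
  match n with
  | 0 => bot m
  | n'.+1 =>
    match M with
    | Ret v => match (insub v : option cvl) with Some V => ret m V | None => bot m end
    | App (Lam M') v => approx n' (subst1 M' v)
    | App (Var _) _ => bot m
    | Seq M1 N => bind m (approx n' M1) (fun V : cvl => approx n' (subst1 N (val V)))
    | @Op _ _ s Ms => op m s (fun i => approx n' (Ms i))
    end
  end.

Definition denot (M : tm) : T m cvl := lub m (fun n => approx n M).

Variable G : RelatorT.

Definition liftV (RV : vl -> vl -> Prop) : cvl -> cvl -> Prop :=
  fun V W => RV (val V) (val W).

Definition closed_rel (RT : tm -> tm -> Prop) (RV : vl -> vl -> Prop) : Prop :=
  (forall M N, RT M N -> tm_closed M /\ tm_closed N) /\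
  (forall V W, RV V W -> vl_closed V /\ vl_closed W).

Definition app_simulation (RT : tm -> tm -> Prop) (RV : vl -> vl -> Prop) : Prop :=
  closed_rel RT RV /\
  (forall M N, RT M N -> G (liftV RV) (denot M) (denot N)) /\
  (forall V W, RV V W -> forall U : cvl, RT (App V (val U)) (App W (val U))).

(* applicative Gamma-similarity = the largest applicative Gamma-simulation
   (union of all of them) *)
Definition simT (M N : tm) : Prop :=
  exists RT RV, app_simulation RT RV /\ RT M N.
Definition simV (V W : vl) : Prop :=
  exists RT RV, app_simulation RT RV /\ RV V W.

Definition openT (n : nat) (M N : tm) : Prop :=
  tm_sc n M /\ tm_sc n N /\
  forall sv : nat -> cvl,
    simT (subst_tm (fun i => val (sv i)) M) (subst_tm (fun i => val (sv i)) N).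
Definition openV (n : nat) (V W : vl) : Prop :=
  vl_sc n V /\ vl_sc n W /\
  forall sv : nat -> cvl,
    simV (subst_vl (fun i => val (sv i)) V) (subst_vl (fun i => val (sv i)) W).

Inductive howeT : nat -> tm -> tm -> Prop :=
| H3 (n : nat) (V W : vl) (N : tm) :
    howeV n V W -> openT n (Ret W) N -> howeT n (Ret V) N
| H4 (n : nat) (V V' W W' : vl) (N : tm) :
    howeV n V V' -> howeV n W W' -> openT n (App V' W') N -> howeT n (App V W) N
| H5 (n : nat) (M L M' L' N : tm) :
    howeT n M L -> howeT n.+1 M' L' -> openT n (Seq L L') N -> howeT n (Seq M M') N
| H6 (n : nat) (s : Sg) (Ms Ns : 'I_(ar s) -> tm) (N : tm) :
    (forall k, howeT n (Ms k) (Ns k)) -> openT n (Op Ns) N -> howeT n (Op Ms) N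
with howeV : nat -> vl -> vl -> Prop :=
| H1 (n x : nat) (V : vl) :
    x < n -> openV n (Var x) V -> howeV n (Var x) V
| H2 (n : nat) (M L : tm) (V : vl) :
    howeT n.+1 M L -> openV n (Lam L) V -> howeV n (Lam M) V.

End MonadProps.

Arguments eval {Sg ar} m _ _ _.
Arguments approx {Sg ar} m n M.

(* Main.v *)
Require Import Defs.
From mathcomp Require Import all_boot.
From Stdlib Require Import FunctionalExtensionality.
Set Implicit Arguments. Unset Strict Implicit. Unset Printing Implicit Defensive.
Set Warnings "-notation-overridden".

Scheme tm_mut := Induction for Defs.tm Sort Prop
  with vl_mut := Induction for Defs.vl Sort Prop.
Combined Scheme tm_vl_mut from tm_mut, vl_mut.

Section Syn.
Variables (Sg : Type) (ar : Sg -> nat).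
Notation tm := (tm ar). Notation vl := (vl ar).

Lemma upren_comp (xi zeta : nat -> nat) :
  (fun x => upren xi (upren zeta x)) = upren (fun x => xi (zeta x)).
Proof. apply functional_extensionality; by case. Qed.

Lemma ren_ren :
  (forall M : tm, forall xi zeta, ren_tm xi (ren_tm zeta M) = ren_tm (fun x => xi (zeta x)) M) /\
  (forall v : vl, forall xi zeta, ren_vl xi (ren_vl zeta v) = ren_vl (fun x => xi (zeta x)) v).
Proof.
apply tm_vl_mut; intros; simpl; try (f_equal; apply functional_extensionality => i; apply H); by rewrite ?H ?H0 ?upren_comp.
Qed.

Lemma up_ren (sg : nat -> vl) xi :
  (fun x => up sg (upren xi x)) = up (fun x => sg (xi x)).
Proof. apply functional_extensionality; by case. Qed.

Lemma subst_ren_fuse :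
  (forall M : tm, forall sg xi, subst_tm sg (ren_tm xi M) = subst_tm (fun x => sg (xi x)) M) /\
  (forall v : vl, forall sg xi, subst_vl sg (ren_vl xi v) = subst_vl (fun x => sg (xi x)) v).
Proof.
apply tm_vl_mut; intros; simpl; try (f_equal; apply functional_extensionality => i; apply H); by rewrite ?H ?H0 ?up_ren.
Qed.

Lemma ren_up (sg : nat -> vl) xi :
  (fun x => ren_vl (upren xi) (up sg x)) = up (fun x => ren_vl xi (sg x)).
Proof.
apply functional_extensionality; case => //= n.
by rewrite !(proj2 ren_ren).
Qed.

Lemma ren_subst_fuse :
  (forall M : tm, forall sg xi, ren_tm xi (subst_tm sg M) = subst_tm (fun x => ren_vl xi (sg x)) M) /\
  (forall v : vl, forall sg xi, ren_vl xi (subst_vl sg v) = subst_vl (fun x => ren_vl xi (sg x)) v).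
Proof.
apply tm_vl_mut; intros; simpl; try (f_equal; apply functional_extensionality => i; apply H); by rewrite ?H ?H0 ?ren_up.
Qed.

Lemma up_up (sg tau : nat -> vl) :
  (fun x => subst_vl (up sg) (up tau x)) = up (fun x => subst_vl sg (tau x)).
Proof.
apply functional_extensionality; case => //= n.
by rewrite (proj2 subst_ren_fuse) (proj2 ren_subst_fuse).
Qed.

Lemma subst_subst :
  (forall M : tm, forall sg tau, subst_tm sg (subst_tm tau M) = subst_tm (fun x => subst_vl sg (tau x)) M) /\
  (forall v : vl, forall sg tau, subst_vl sg (subst_vl tau v) = subst_vl (fun x => subst_vl sg (tau x)) v).
Proof.
apply tm_vl_mut; intros; simpl; try (f_equal; apply functional_extensionality => i; apply H); by rewrite ?H ?H0 ?up_up.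
Qed.

Lemma subst_ext :
  (forall M : tm, forall n sg sg', tm_sc n M -> (forall i, i < n -> sg i = sg' i) ->
      subst_tm sg M = subst_tm sg' M) /\
  (forall v : vl, forall n sg sg', vl_sc n v -> (forall i, i < n -> sg i = sg' i) ->
      subst_vl sg v = subst_vl sg' v).
Proof.
have hup : forall n (sg sg' : nat -> vl), (forall i, i < n -> sg i = sg' i) ->
   forall i, i < n.+1 -> up sg i = up sg' i.
  by move=> n sg sg' h [|i] //= hi; rewrite h.
apply tm_vl_mut; intros; simpl in *.
- by rewrite (H _ _ _ H0 H1).
- case/andP: H1 => h1 h2. by rewrite (H _ _ _ h1 H2) (H0 _ _ _ h2 H2).
- case/andP: H1 => h1 h2. rewrite (H _ _ _ h1 H2) (H0 _ _ _ h2 (hup _ _ _ H2)) //.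
- f_equal; apply functional_extensionality => i.
  move/forallP: H0 => h0. exact: H _ _ _ (h0 i) H1.
- by apply H0.
- by rewrite (H _ _ _ H0 (hup _ _ _ H1)).
Qed.

Lemma subst_id :
  (forall M : tm, subst_tm Var M = M) /\ (forall v : vl, subst_vl Var v = v).
Proof.
have hup : up (@Var Sg ar) = Var by apply functional_extensionality; case.
apply tm_vl_mut; intros; simpl; rewrite ?hup; try congruence.
f_equal; apply functional_extensionality => i; apply H.
Qed.

Lemma ren_sc :
  (forall M : tm, forall n m xi, tm_sc n M -> (forall i, i < n -> xi i < m) -> tm_sc m (ren_tm xi M)) /\
  (forall v : vl, forall n m xi, vl_sc n v -> (forall i, i < n -> xi i < m) -> vl_sc m (ren_vl xi v)).
Proof.
have hup : forall n m xi, (forall i, i < n -> xi i < m) -> forall i, i < n.+1 -> upren xi i < m.+1.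
  by move=> n m xi h [|i] //= hi; apply h.
apply tm_vl_mut; intros; simpl in *.
- exact: H H0 H1.
- case/andP: H1 => h1 h2; by rewrite (H _ _ _ h1 H2) (H0 _ _ _ h2 H2).
- case/andP: H1 => h1 h2; by rewrite (H _ _ _ h1 H2) (H0 _ _ _ h2 (hup _ _ _ H2)).
- apply/forallP => i; move/forallP: H0 => h0; exact: H _ _ _ (h0 i) H1.
- exact: H0 _ H.
- exact: H _ _ _ H0 (hup _ _ _ H1).
Qed.

Lemma subst_sc :
  (forall M : tm, forall n m sg, tm_sc n M -> (forall i, i < n -> vl_sc m (sg i)) -> tm_sc m (subst_tm sg M)) /\
  (forall v : vl, forall n m sg, vl_sc n v -> (forall i, i < n -> vl_sc m (sg i)) -> vl_sc m (subst_vl sg v)).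
Proof.
have hup : forall n m (sg : nat -> vl), (forall i, i < n -> vl_sc m (sg i)) ->
   forall i, i < n.+1 -> vl_sc m.+1 (up sg i).
  move=> n m sg h [|i] //= hi; apply: (proj2 ren_sc) (h _ hi) _ => //.
apply tm_vl_mut; intros; simpl in *.
- exact: H H0 H1.
- case/andP: H1 => h1 h2; by rewrite (H _ _ _ h1 H2) (H0 _ _ _ h2 H2).
- case/andP: H1 => h1 h2; by rewrite (H _ _ _ h1 H2) (H0 _ _ _ h2 (hup _ _ _ H2)).
- apply/forallP => i; move/forallP: H0 => h0; exact: H _ _ _ (h0 i) H1.
- exact: H0 _ H.
- exact: H _ _ _ H0 (hup _ _ _ H1).
Qed.

End Syn.

Section Sem.
Variables (Sg : Type) (ar : Sg -> nat) (m : MonadData ar).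
Unset Implicit Arguments.
Variable (G : RelatorT m).
Set Implicit Arguments.
Hypotheses (Hm : cont_sigma_monad m) (HG : is_relator G).
Notation tm := (tm ar). Notation vl := (vl ar). Notation cvl := (cvl ar).
Notation simT := (simT G). Notation simV := (simV G).
Notation openT := (openT G). Notation openV := (openV G).

Lemma G_mono X Y (R R' : X -> Y -> Prop) u v :
  (forall x y, R x y -> R' x y) -> G _ _ R u v -> G _ _ R' u v.
Proof. case: HG => _ [_ [_ [h _]]] hR; exact: h hR u v. Qed.

Lemma G_comp X Y Z (R : X -> Y -> Prop) (R' : Y -> Z -> Prop) u v w :
  G _ _ R u v -> G _ _ R' v w -> G _ _ (fun x z => exists y, R x y /\ R' y z) u w.
Proof. case: HG => _ [h _]; exact: h. Qed.

Definition dflt : cvl := exist _ (Lam (Ret (Var 0))) isT.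

Lemma val_insubd (v : vl) : vl_closed v -> val (insubd dflt v) = v.
Proof. move=> h; by rewrite /insubd (insubT (fun v => vl_closed v) h). Qed.

Lemma closed_subst_tm (M : tm) sg : tm_sc 0 M -> subst_tm sg M = M.
Proof.
move=> h; rewrite -{2}((proj1 (subst_id ar)) M).
exact: (proj1 (subst_ext ar)) h _.
Qed.

Lemma closed_subst_vl (v : vl) sg : vl_sc 0 v -> subst_vl sg v = v.
Proof.
move=> h; rewrite -{2}((proj2 (subst_id ar)) v).
exact: (proj2 (subst_ext ar)) h _.
Qed.

Lemma simT_closed M N : simT M N -> tm_closed M /\ tm_closed N.
Proof. by case=> RT [RV [[[h _] _] r]]; apply: h. Qed.
Lemma simV_closed v w : simV v w -> vl_closed v /\ vl_closed w.
Proof. by case=> RT [RV [[[_ h] _] r]]; apply: h. Qed.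

Lemma simT_denot M N : simT M N -> G _ _ (liftV simV) (denot m M) (denot m N).
Proof.
case=> RT [RV [[hc [hd hv]] r]].
apply: G_mono (hd _ _ r) => x y h; exists RT, RV; split => //; split => //; split => //.
Qed.

Lemma simV_app v w (U : cvl) : simV v w -> simT (App v (val U)) (App w (val U)).
Proof.
case=> RT [RV [[hc [hd hv]] r]].
exists RT, RV; split; [split => //; split => // | exact: hv].
Qed.

Lemma sim_refl_rel :
  app_simulation G (fun M N => M = N /\ tm_closed M) (fun v w => v = w /\ vl_closed v).
Proof.
split; [split => [M N [-> h] | v w [-> h]] // | split].
- move=> M N [-> h].
  case: HG => [heq _].
  apply: G_mono (heq _ (denot m N)) => x y ->; split => //; exact: valP.
- move=> v w [-> h] U; split => //; rewrite /tm_closed /=; apply/andP; split => //; exact: valP.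
Qed.

Lemma simT_refl M : tm_closed M -> simT M M.
Proof. move=> h; do 2 eexists; split; [exact: sim_refl_rel | by split]. Qed.
Lemma simV_refl v : vl_closed v -> simV v v.
Proof. move=> h; do 2 eexists; split; [exact: sim_refl_rel | by split]. Qed.

Lemma sim_comp_rel RT1 RV1 RT2 RV2 :
  app_simulation G RT1 RV1 -> app_simulation G RT2 RV2 ->
  app_simulation G (fun A C => exists B, RT1 A B /\ RT2 B C)
                   (fun A C => exists B, RV1 A B /\ RV2 B C).
Proof.
move=> [[c1 c1'] [d1 v1]] [[c2 c2'] [d2 v2]].
split; [split|split].
- move=> A C [B [h1 h2]]; split; [exact: (c1 _ _ h1).1 | exact: (c2 _ _ h2).2].
- move=> A C [B [h1 h2]]; split; [exact: (c1' _ _ h1).1 | exact: (c2' _ _ h2).2].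
- move=> A C [B [h1 h2]].
  apply: G_mono (G_comp (d1 _ _ h1) (d2 _ _ h2)) => x z [y [hx hz]].
  by exists (val y).
- move=> A C [B [h1 h2]] U; exists (App B (val U)); split; [exact: v1 | exact: v2].
Qed.

Lemma simT_trans A B C : simT A B -> simT B C -> simT A C.
Proof.
case=> RT1 [RV1 [s1 r1]] [RT2 [RV2 [s2 r2]]].
do 2 eexists; split; [exact: sim_comp_rel s1 s2 | by exists B].
Qed.
Lemma simV_trans A B C : simV A B -> simV B C -> simV A C.
Proof.
case=> RT1 [RV1 [s1 r1]] [RT2 [RV2 [s2 r2]]].
do 2 eexists; split; [exact: sim_comp_rel s1 s2 | by exists B].
Qed.

                    
Lemma openT_trans n A B C : openT n A B -> openT n B C -> openT n A C.
Proof.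
move=> [h1 [h2 h]] [_ [h3 h']]; split => //; split => // sv; exact: simT_trans (h sv) (h' sv).
Qed.
Lemma openV_trans n A B C : openV n A B -> openV n B C -> openV n A C.
Proof.
move=> [h1 [h2 h]] [_ [h3 h']]; split => //; split => // sv; exact: simV_trans (h sv) (h' sv).
Qed.

Lemma openT0_sim M N : openT 0 M N -> simT M N.
Proof.
move=> [h1 [h2 h]]; have := h (fun _ => dflt).
by rewrite !closed_subst_tm.
Qed.
Lemma openV0_sim M N : openV 0 M N -> simV M N.
Proof.
move=> [h1 [h2 h]]; have := h (fun _ => dflt).
by rewrite !closed_subst_vl.
Qed.
Lemma simV_openV0 v w : simV v w -> openV 0 v w.
Proof.
move=> h; case: (simV_closed h) => c1 c2; split => //; split => // sv.
by rewrite !closed_subst_vl.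
Qed.

Lemma openT_ren n k xi L N : openT n L N -> (forall i, i < n -> xi i < k) ->
  openT k (ren_tm xi L) (ren_tm xi N).
Proof.
move=> [h1 [h2 h]] hx; split; [exact: (proj1 (ren_sc ar)) h1 hx|split; [exact: (proj1 (ren_sc ar)) h2 hx|]].
move=> sv; rewrite !(proj1 (subst_ren_fuse ar)); exact: (h (fun x => sv (xi x))).
Qed.
Lemma openV_ren n k xi L N : openV n L N -> (forall i, i < n -> xi i < k) ->
  openV k (ren_vl xi L) (ren_vl xi N).
Proof.
move=> [h1 [h2 h]] hx; split; [exact: (proj2 (ren_sc ar)) h1 hx|split; [exact: (proj2 (ren_sc ar)) h2 hx|]].
move=> sv; rewrite !(proj2 (subst_ren_fuse ar)); exact: (h (fun x => sv (xi x))).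
Qed.

Lemma subst_closed_aux n k (tau : nat -> vl) (sv : nat -> cvl) :
  (forall i, i < n -> vl_sc k (tau i)) ->
  forall i, i < n -> subst_vl (fun j => val (sv j)) (tau i) =
    val (insubd dflt (subst_vl (fun j => val (sv j)) (tau i))).
Proof.
move=> ht i hi; rewrite val_insubd //.
apply: (proj2 (subst_sc ar)) (ht _ hi) _ => j _; exact: valP.
Qed.

Lemma openT_subst n k tau L N : openT n L N -> (forall i, i < n -> vl_sc k (tau i)) ->
  openT k (subst_tm tau L) (subst_tm tau N).
Proof.
move=> [h1 [h2 h]] ht; split; [exact: (proj1 (subst_sc ar)) h1 ht|split; [exact: (proj1 (subst_sc ar)) h2 ht|]].
move=> sv; rewrite !(proj1 (subst_subst ar)).
rewrite ((proj1 (subst_ext ar)) _ _ _ _ h1 (subst_closed_aux sv ht)).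
rewrite ((proj1 (subst_ext ar)) _ _ _ _ h2 (subst_closed_aux sv ht)).
exact: h.
Qed.
Lemma openV_subst n k tau L N : openV n L N -> (forall i, i < n -> vl_sc k (tau i)) ->
  openV k (subst_vl tau L) (subst_vl tau N).
Proof.
move=> [h1 [h2 h]] ht; split; [exact: (proj2 (subst_sc ar)) h1 ht|split; [exact: (proj2 (subst_sc ar)) h2 ht|]].
move=> sv; rewrite !(proj2 (subst_subst ar)).
rewrite ((proj2 (subst_ext ar)) _ _ _ _ h1 (subst_closed_aux sv ht)).
rewrite ((proj2 (subst_ext ar)) _ _ _ _ h2 (subst_closed_aux sv ht)).
exact: h.
Qed.

Lemma openV_var0 k : openV k.+1 (Var 0) (Var 0).
Proof. split => //; split => // sv /=; apply: simV_refl; exact: valP. Qed.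

End Sem.

Scheme howeT_min := Minimality for howeT Sort Prop
  with howeV_min := Minimality for howeV Sort Prop.
Combined Scheme howe_mut from howeT_min, howeV_min.

Section Howe.
Variables (Sg : Type) (ar : Sg -> nat) (m : MonadData ar).
Unset Implicit Arguments.
Variable (G : RelatorT m).
Set Implicit Arguments.
Hypotheses (HG : is_relator G).
Notation tm := (tm ar). Notation vl := (vl ar). Notation cvl := (cvl ar).
Notation howeT := (howeT G). Notation howeV := (howeV G).

Lemma howeT_open n M L N : howeT n M L -> openT G n L N -> howeT n M N.
Proof.
case=> [n' V W N' h o | n' V V' W W' N' h1 h2 o | n' M1 L1 M2 L2 N' h1 h2 o
       | n' s Ms Ns N' h o] o'.
- exact: Defs.H3 h (openT_trans HG o o').
- exact: Defs.H4 h1 h2 (openT_trans HG o o').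
- exact: Defs.H5 h1 h2 (openT_trans HG o o').
- exact: Defs.H6 h (openT_trans HG o o').
Qed.

Lemma howeV_open n M L N : howeV n M L -> openV G n L N -> howeV n M N.
Proof.
case=> [n' x V hx o | n' M1 L1 V h o] o'.
- exact: Defs.H1 hx (openV_trans HG o o').
- exact: Defs.H2 h (openV_trans HG o o').
Qed.

Lemma howe_sc :
  (forall n M N, howeT n M N -> tm_sc n M /\ tm_sc n N) /\
  (forall n v w, howeV n v w -> vl_sc n v /\ vl_sc n w).
Proof.
apply howe_mut; intros; simpl.
- by split; [apply H0 | case: H1 => _ []].
- by split; [rewrite H0.1 H2.1 | case: H3 => _ []].
- by split; [rewrite H0.1 H2.1 | case: H3 => _ []].
- split; [apply/forallP => k; exact: (H0 k).1 | by case: H1 => _ []].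
- by split; [ | case: H0 => _ []].
- by split; [apply H0 | case: H1 => _ []].
Qed.

Lemma howe_ren :
  (forall n M N, howeT n M N -> forall k xi, (forall i, i < n -> xi i < k) ->
      howeT k (ren_tm xi M) (ren_tm xi N)) /\
  (forall n v w, howeV n v w -> forall k xi, (forall i, i < n -> xi i < k) ->
      howeV k (ren_vl xi v) (ren_vl xi w)).
Proof.
have hup : forall n m xi, (forall i, i < n -> xi i < m) -> forall i, i < n.+1 -> upren xi i < m.+1.
  by move=> n m' xi h [|i] //= hi; apply h.
apply howe_mut.
- move=> n V W N hV IHV o k xi hx /=.
  exact: Defs.H3 (IHV _ _ hx) (openT_ren o hx).
- move=> n V V' W W' N hV IHV hW IHW o k xi hx /=.
  exact: Defs.H4 (IHV _ _ hx) (IHW _ _ hx) (openT_ren o hx).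
- move=> n M L M' L' N hM IHM hM' IHM' o k xi hx /=.
  exact: Defs.H5 (IHM _ _ hx) (IHM' _ _ (hup _ _ _ hx)) (openT_ren o hx).
- move=> n s Ms Ns N hMs IHMs o k xi hx /=.
  exact: Defs.H6 (fun j => IHMs j _ _ hx) (openT_ren o hx).
- move=> n x V hxn o k xi hx /=.
  exact: Defs.H1 (hx _ hxn) (openV_ren o hx).
- move=> n M L V hM IHM o k xi hx /=.
  exact: Defs.H2 (IHM _ _ (hup _ _ _ hx)) (openV_ren o hx).
Qed.

Lemma howe_subst :
  (forall n M N, howeT n M N -> forall k (sg tau : nat -> vl), (forall i, i < n -> howeV k (sg i) (tau i)) ->
      howeT k (subst_tm sg M) (subst_tm tau N)) /\
  (forall n v w, howeV n v w -> forall k (sg tau : nat -> vl), (forall i, i < n -> howeV k (sg i) (tau i)) ->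
      howeV k (subst_vl sg v) (subst_vl tau w)).
Proof.
have hup : forall n k (sg tau : nat -> vl), (forall i, i < n -> howeV k (sg i) (tau i)) ->
   forall i, i < n.+1 -> howeV k.+1 (up sg i) (up tau i).
  move=> n k sg tau h [|i] hi /=.
  - apply: Defs.H1 => //; exact: openV_var0.
  - exact: (proj2 howe_ren) _ _ _ (h _ hi) k.+1 S (fun j hj => hj).
have hsc : forall n k (sg tau : nat -> vl), (forall i, i < n -> howeV k (sg i) (tau i)) ->
   forall i, i < n -> vl_sc k (tau i).
  by move=> n k sg tau h i hi; case: ((proj2 howe_sc) _ _ _ (h i hi)).
apply howe_mut.
- move=> n V W N hV IHV o k sg tau hx /=.
  exact: Defs.H3 (IHV _ _ _ hx) (openT_subst o (hsc _ _ _ _ hx)).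
- move=> n V V' W W' N hV IHV hW IHW o k sg tau hx /=.
  exact: Defs.H4 (IHV _ _ _ hx) (IHW _ _ _ hx) (openT_subst o (hsc _ _ _ _ hx)).
- move=> n M L M' L' N hM IHM hM' IHM' o k sg tau hx /=.
  exact: Defs.H5 (IHM _ _ _ hx) (IHM' _ _ _ (hup _ _ _ _ hx)) (openT_subst o (hsc _ _ _ _ hx)).
- move=> n s Ms Ns N hMs IHMs o k sg tau hx /=.
  exact: Defs.H6 (fun j => IHMs j _ _ _ hx) (openT_subst o (hsc _ _ _ _ hx)).
- move=> n x V hxn o k sg tau hx /=.
  exact: howeV_open (hx _ hxn) (openV_subst o (hsc _ _ _ _ hx)).
- move=> n M L V hM IHM o k sg tau hx /=.
  exact: Defs.H2 (IHM _ _ _ (hup _ _ _ _ hx)) (openV_subst o (hsc _ _ _ _ hx)).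
Qed.

End Howe.

Section Dom.
Variables (Sg : Type) (ar : Sg -> nat) (m : MonadData ar).
Hypothesis (Hm : cont_sigma_monad m).
Notation tm := (tm ar). Notation vl := (vl ar). Notation cvl := (cvl ar).

Lemma le_refl X (u : T m X) : le m u u.
Proof. case: Hm => _ [h _]; exact: (h X).1. Qed.
Lemma le_trans X (u v w : T m X) : le m u v -> le m v w -> le m u w.
Proof. case: Hm => _ [h _]; exact: (h X).2.1. Qed.
Lemma le_anti X (u v : T m X) : le m u v -> le m v u -> u = v.
Proof. case: Hm => _ [h _]; exact: (h X).2.2.1. Qed.
Lemma bot_le X (u : T m X) : le m (bot m) u.
Proof. case: Hm => _ [h _]; exact: (h X).2.2.2.1. Qed.
Lemma lub_ub X (c : nat -> T m X) n : chain c -> le m (c n) (lub m c).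
Proof. case: Hm => _ [h _] hc; exact: ((h X).2.2.2.2 c hc).1. Qed.
Lemma lub_least X (c : nat -> T m X) u : chain c -> (forall n, le m (c n) u) -> le m (lub m c) u.
Proof. case: Hm => _ [h _] hc; exact: ((h X).2.2.2.2 c hc).2. Qed.

Lemma chain_mono X (c : nat -> T m X) n k : chain c -> n <= k -> le m (c n) (c k).
Proof.
move=> hc; elim: k => [|k IH]; first by rewrite leqn0 => /eqP ->; apply: le_refl.
rewrite leq_eqVlt => /orP [/eqP -> | hk]; first by apply: le_refl.
exact: le_trans (IH hk) (hc k).
Qed.

Lemma lub_shift X (c : nat -> T m X) : chain c -> lub m (fun n => c n.+1) = lub m c.
Proof.
move=> hc; have hc' : chain (fun n => c n.+1) by move=> n; apply: hc.
apply: le_anti.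
- apply: lub_least => // n; exact: lub_ub.
- apply: lub_least => // n; apply: le_trans (hc n) _. exact: (@lub_ub _ (fun n => c n.+1) n hc').
Qed.

Lemma lub_const X (x : T m X) : lub m (fun _ => x) = x.
Proof.
have hc : chain (fun _ : nat => x) by move=> n; apply: le_refl.
apply: le_anti; first by apply: lub_least => // n; apply: le_refl.
exact: (@lub_ub _ (fun _ => x) 0 hc).
Qed.

Lemma lub_mono X (c d : nat -> T m X) : chain c -> chain d -> (forall n, le m (c n) (d n)) ->
  le m (lub m c) (lub m d).
Proof. move=> hc hd h; apply: lub_least => // n; apply: le_trans (h n) _; exact: lub_ub. Qed.

Lemma lub_diag X (b : nat -> nat -> T m X) :
  (forall n k, le m (b n k) (b n.+1 k)) -> (forall n k, le m (b n k) (b n k.+1)) ->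
  lub m (fun n => lub m (fun k => b n k)) = lub m (fun n => b n n).
Proof.
move=> h1 h2.
have hi : forall n, chain (fun k => b n k) by move=> n k; apply: h2.
have ho : forall k, chain (fun n => b n k) by move=> k n; apply: h1.
have hc : chain (fun n => lub m (fun k => b n k)).
  by move=> n; apply: lub_mono => // k; apply: h1.
have hd : chain (fun n => b n n) by move=> n; apply: le_trans (h1 n n) (h2 _ _).
apply: le_anti.
- apply: lub_least => // n; apply: lub_least => // k.
  have e1 := chain_mono (ho k) (leq_maxl n k); simpl in e1.
  have e2 := chain_mono (hi (maxn n k)) (leq_maxr n k); simpl in e2.
  have e3 := @lub_ub _ (fun n => b n n) (maxn n k) hd; simpl in e3.
  exact: le_trans (le_trans e1 e2) e3.
- apply: lub_least => // n.
  have e1 := @lub_ub _ (fun k => b n k) n (hi n); simpl in e1.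
  have e2 := @lub_ub _ (fun n => lub m (fun k => b n k)) n hc; simpl in e2.
  exact: le_trans e1 e2.
Qed.

Lemma approx_step n (M : tm) : le m (approx m n M) (approx m n.+1 M).
Proof.
case: Hm => _ [_ [[hb1 [hb2 _]] [ho _]]].
elim: n M => [|n IH] M; first exact: bot_le.
case: M => [v | [x|M'] w | M1 N | s Ms] /=.
- case: insub => *; exact: le_refl.
- exact: le_refl.
- exact: IH.
- apply: le_trans (hb1 _ _ _ _ _ (IH M1)) _; apply: hb2 => V; exact: IH.
- apply: ho => i; exact: IH.
Qed.

Lemma approx_chain (M : tm) : chain (fun n => approx m n M).
Proof. move=> n; exact: approx_step. Qed.

Lemma denot_ret (V : cvl) : denot m (Ret (val V)) = ret m V.
Proof.
rewrite /denot -lub_shift; last exact: approx_chain.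
by rewrite /= valK lub_const.
Qed.

Lemma denot_app (L : tm) v : denot m (App (Lam L) v) = denot m (subst1 L v).
Proof. rewrite /denot -lub_shift //; exact: approx_chain. Qed.

Lemma denot_op s (Ns : 'I_(ar s) -> tm) : denot m (Op Ns) = op m s (fun i => denot m (Ns i)).
Proof.
case: Hm => _ [_ [_ [_ ho]]].
rewrite /denot -lub_shift /=; last exact: approx_chain.
rewrite ho //; move=> i; exact: approx_chain.
Qed.

Lemma denot_seq (L L' : tm) :
  denot m (Seq L L') = bind m (denot m L) (fun V : cvl => denot m (subst1 L' (val V))).
Proof.
case: Hm => _ [_ [[hb1 [hb2 [hb3 hb4]]] _]].
rewrite /denot -lub_shift /=; last exact: approx_chain.
rewrite hb3; last exact: approx_chain.
have E : (fun n => bind m (approx m n L) (fun V : cvl => lub m (fun k => approx m k (subst1 L' (val V)))))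
  = (fun n => lub m (fun k => bind m (approx m n L) (fun V : cvl => approx m k (subst1 L' (val V))))).
  apply: functional_extensionality => n; apply: hb4 => V; exact: approx_chain.
rewrite E.
rewrite lub_diag //.
- move=> n k; apply: hb1; exact: approx_step.
- move=> n k; apply: hb2 => V; exact: approx_step.
Qed.

End Dom.

Section Main.
Variables (Sg : Type) (ar : Sg -> nat) (m : MonadData ar).
Unset Implicit Arguments.
Variable (G : RelatorT m).
Set Implicit Arguments.
Hypotheses (Hm : cont_sigma_monad m) (HG : is_relator G) (Hind : relator_inductive G)
  (Hsig : relator_respects_sig G).
Notation tm := (tm ar). Notation vl := (vl ar). Notation cvl := (cvl ar).

Lemma howeT_inv n M N : howeT G n M N -> match M with
 | Ret V => exists W, howeV G n V W /\ openT G n (Ret W) N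
 | App V W => exists V' W', howeV G n V V' /\ howeV G n W W' /\ openT G n (App V' W') N
 | Seq M1 M2 => exists L L', howeT G n M1 L /\ howeT G n.+1 M2 L' /\ openT G n (Seq L L') N
 | @Op _ _ s Ms => exists Ns : 'I_(ar s) -> tm, (forall k, howeT G n (Ms k) (Ns k)) /\ openT G n (Op Ns) N
 end.
Proof.
case=> [n' V W N' h o | n' V V' W W' N' h1 h2 o | n' M1 L1 M2 L2 N' h1 h2 o
       | n' s Ms Ns N' h o].
- by exists W.
- by exists V', W'.
- by exists L1, L2.
- by exists Ns.
Qed.

Lemma howeV_inv n (M : tm) V : howeV G n (Lam M) V -> exists L, howeT G n.+1 M L /\ openV G n (Lam L) V.
Proof.
move=> h; inversion h; subst; by eexists; split; eauto.
Qed.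

Definition Rh : cvl -> cvl -> Prop := fun V W => howeV G 0 (val V) (val W).

Lemma finish X (N' N : tm) : G _ _ Rh X (denot m N') -> simT G N' N -> G _ _ Rh X (denot m N).
Proof.
move=> h1 h2.
have h3 := G_comp HG h1 (simT_denot HG h2).
refine (G_mono HG _ h3) => x z [y [hxy hyz]].
rewrite /Rh /liftV in hxy hyz *. exact (howeV_open HG hxy (simV_openV0 hyz)).
Qed.

Lemma key M n X : eval m M n X -> forall N, howeT G 0 M N -> G _ _ Rh X (denot m N).
Proof.
case: HG => _ [_ [_ [_ [Hret Hbind]]]].
elim=> {M n X}.
- move=> M N _; exact ((Hind Rh).1 _).
- move=> V n N /howeT_inv [W [hw o]].
  have hc : vl_closed W by case: ((proj2 (howe_sc G)) _ _ _ hw).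
  apply: (finish (N' := Ret (val (exist (fun v => vl_closed v) W hc)))); last exact: openT0_sim o.
  rewrite denot_ret //; exact: Hret.
- move=> M1 M2 n X Y hM IHM hN IHN N /howeT_inv [L [L' [hL [hL' o]]]].
  apply: (finish (N' := Seq L L')); last exact: openT0_sim o.
  rewrite denot_seq //; apply: Hbind (IHM _ hL) => x y hxy.
  apply: IHN; apply: (proj1 (howe_subst HG)) hL' _ _ _ _.
  by case.
- move=> M V n X he IH N /howeT_inv [V' [W' [hl [hv o]]]].
  case: (howeV_inv hl) => L [hML oL].
  have hc : vl_closed W' by case: ((proj2 (howe_sc G)) _ _ _ hv).
  have hs := (proj1 (howe_subst HG)) _ _ _ hML 0 (scons (val V) Var) (scons W' Var) ltac:(by case).
  apply: (finish (N' := App (Lam L) (val (exist (fun v => vl_closed v) W' hc)))); last first.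
    exact (simT_trans HG (simV_app (exist (fun v => vl_closed v) W' hc) (openV0_sim oL)) (openT0_sim o)).
  rewrite denot_app //; exact: IH.
- move=> s Ms n Xs he IH N /howeT_inv [Ns [hk o]].
  apply: (finish (N' := Op Ns)); last exact: openT0_sim o.
  rewrite denot_op //; apply: Hsig => i; exact: IH.
Qed.

End Main.

Theorem mainTheorem8 (Sg : Type) (ar : Sg -> nat) (m : MonadData ar)
  (G : RelatorT m) :
  cont_sigma_monad m ->
  is_relator G -> relator_inductive G -> relator_respects_sig G ->
  forall (M N : tm ar) (n : nat) (X : T m (cvl ar)),
    tm_closed M -> tm_closed N ->
    howeT G 0 M N -> eval m M n X ->
    G (cvl ar) (cvl ar) (fun V W => howeV G 0 (val V) (val W)) X (denot m N).
Proof.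
move=> Hm HG Hind Hsig M N n X _ _ h he.
exact: (key Hm HG Hind Hsig he h).
Qed.
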